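(* Let $(G,a,b)$ be a linear interval strip. Then every vertex $v\in N_G(a)$ satisfies $\deg_{G^2}(v)\le 3\omega(G)-3$.
   Context: A linear interval graph is obtained by taking a line $\Sigma$, intervals $F_1,\dots,F_k\subseteq\Sigma$ each homeomorphic to $[0,1]$, a finite set of points of $\Sigma$ as vertex set, and joining two points iff both lie in some $F_i$. A linear interval strip is a triple $(G,v_1,v_n)$ where $G$ is a linear interval graph admitting such a representation in which the vertices in order along the line are $v_1,\dots,v_n$ (so the ends are the leftmost and rightmost vertices). $G^2$ is the graph on $V(G)$ with distinct vertices adjacent iff at distance at most $2$ in $G$. $\omega$ is the clique number. *)

(* Defs.v *)
From HB Require Import structures.
From mathcomp Require Import all_boot all_order all_algebra.
Set Implicit Arguments. Unset Strict Implicit. Unset Printing Implicit Defensive.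
Import Order.TTheory GRing.Theory Num.Theory.

(* A representation of (e, a, b) as a linear interval strip, with the line
   Sigma modelled by an ordered field R: vertices are distinct points pos v,
   the intervals F_i = [l_i, r_i] (l_i < r_i, i.e. homeomorphic to [0,1]) are
   the entries of Fs, two distinct vertices are adjacent iff both lie in some
   F_i, and a (resp. b) is the leftmost (resp. rightmost) vertex. *)
Definition lin_interval_strip_rep (R : realFieldType) (T : finType) (e : rel T)
    (a b : T) (pos : T -> R) (Fs : seq (R * R)) : Prop :=
  [/\ injective pos,
      all (fun I : R * R => (I.1 < I.2)%R) Fs,
      (forall x y : T, e x y =
         (x != y) && has (fun I : R * R =>
           [&& (I.1 <= pos x)%R, (pos x <= I.2)%R,
               (I.1 <= pos y)%R & (pos y <= I.2)%R]) Fs),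
      (forall v : T, (pos a <= pos v)%R) &
      (forall v : T, (pos v <= pos b)%R)].

Definition is_lin_interval_strip (R : realFieldType) (T : finType) (e : rel T)
    (a b : T) : Prop :=
  exists (pos : T -> R) (Fs : seq (R * R)), lin_interval_strip_rep e a b pos Fs.

Definition is_clique (T : finType) (e : rel T) (Q : {set T}) : bool :=
  [forall x in Q, forall y in Q, (x != y) ==> e x y].

Definition clique_number (T : finType) (e : rel T) : nat :=
  \max_(Q : {set T} | is_clique e Q) #|Q|.

Definition sq_adj (T : finType) (e : rel T) (x y : T) : bool :=
  (x != y) && (e x y || [exists u, e x u && e u y]).

Definition deg_sq (T : finType) (e : rel T) (v : T) : nat :=
  #|[set w | sq_adj e v w]|.

(* Main.v *)
Require Import Defs.
From HB Require Import structures.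
From mathcomp Require Import all_boot all_order all_algebra.
From mathcomp Require Import zify.
Import Order.TTheory GRing.Theory Num.Theory.
Set Implicit Arguments. Unset Strict Implicit.

Lemma ex_max (R : realFieldType) (T : finType) (P : pred T) (f : T -> R) x0 :
  P x0 -> exists2 m, P m & forall w, P w -> (f w <= f m)%R.
Proof.
move=> Px0; case: (Order.TotalTheory.arg_maxP f Px0) => m Pm H; exists m => //.
Qed.

Lemma arith (d x u u12 i1 c1 c2 c3 i2 w : nat) : d <= x -> u = 1 + x ->
  u12 = c1 + c2 - i1 -> 0 < i1 -> u = u12 + c3 - i2 -> 0 < i2 -> i1 <= c1 ->
  i2 <= c3 -> i1 <= u12 -> c1 <= w -> c2 <= w -> c3 <= w -> d <= 3 * w - 3.
Proof. lia. Qed.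

Section S.
Variables (R : realFieldType) (T : finType) (e : rel T) (a b : T)
  (pos : T -> R) (Fs : seq (R * R)).
Hypothesis H : lin_interval_strip_rep e a b pos Fs.
Local Open Scope ring_scope.

Definition seg (x y : T) : {set T} := [set w | (pos x <= pos w) && (pos w <= pos y)].

Lemma between u w z : e u w -> pos u <= pos z -> pos z <= pos w -> z != w ->
  e z w.
Proof.
case: H => _ _ He _ _.
rewrite !He => /andP[_ /hasP[I IF /and4P[h1 h2 h3 h4]]] uz zw nzw.
rewrite nzw /=; apply/hasP; exists I => //.
by rewrite h4 (le_trans h1 uz) (le_trans zw h4) (le_trans h1 (le_trans uz zw)).
Qed.

Lemma seg_clique x y : (x = y \/ e x y) -> is_clique e (seg x y).
Proof.
case: H => inj _ He _ _ Hxy.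
apply/forallP => w; apply/implyP; rewrite inE => /andP[xw wy].
apply/forallP => w'; apply/implyP; rewrite inE => /andP[xw' wy'].
apply/implyP => nww.
case: Hxy => [xy|exy]; first subst y.
  exfalso; move/negP: nww; apply; apply/eqP; apply: inj.
  by apply/eqP; rewrite eq_le (le_trans wy xw') (le_trans wy' xw).
move: exy; rewrite !He => /andP[_ /hasP[I IF /and4P[h1 h2 h3 h4]]].
rewrite nww /=; apply/hasP; exists I => //.
by rewrite (le_trans h1 xw) (le_trans wy h4) (le_trans h1 xw') (le_trans wy' h4).
Qed.

Lemma seg_card x y : (x = y \/ e x y) -> (#|seg x y| <= clique_number e)%N.
Proof.
move=> h; rewrite /clique_number.
apply: (leq_bigmax_cond (P := fun Q : {set T} => is_clique e Q) (F := fun Q : {set T} => #|Q|)). exact: seg_clique h.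
Qed.

End S.

Theorem mainTheorem10 (R : realFieldType) (T : finType) (e : rel T) (a b : T) :
  is_lin_interval_strip R e a b ->
  forall v : T, e a v -> deg_sq e v <= 3 * clique_number e - 3.
Proof.
move=> [pos [Fs H]] v eav.
have Hrep := H.
case: H => inj _ He amin _.
have esym x y : e x y -> e y x.
  rewrite !He => /andP[nxy /hasP[I IF /and4P[h1 h2 h3 h4]]].
  rewrite eq_sym nxy /=; apply/hasP; exists I => //; by rewrite h1 h2 h3 h4.
have [u1 Pu1 M1] := ex_max pos (P := fun w => (w == v) || e v w) (x0 := v) (introT orP (or_introl (eqxx v))).
have [u2 Pu2 M2] := ex_max pos (P := fun w => (w == u1) || e u1 w) (x0 := u1) (introT orP (or_introl (eqxx u1))).
have vu1 : (pos v <= pos u1)%R by apply: M1; rewrite eqxx.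
have u1u2 : (pos u1 <= pos u2)%R by apply: M2; rewrite eqxx.
have m1 w : e v w -> (pos w <= pos u1)%R by move=> h; apply: M1; rewrite h orbT.
have m2 w : e u1 w -> (pos w <= pos u2)%R by move=> h; apply: M2; rewrite h orbT.
have c1 := seg_card Hrep (or_intror eav).
have c2 : (#|seg pos v u1| <= clique_number e)%N.
  apply: (seg_card Hrep); case/orP: Pu1 => [/eqP ->|]; by [left|right].
have c3 : (#|seg pos u1 u2| <= clique_number e)%N.
  apply: (seg_card Hrep); case/orP: Pu2 => [/eqP ->|]; by [left|right].
set C1 := seg pos a v; set C2 := seg pos v u1; set C3 := seg pos u1 u2.
have vC1 : v \in C1 by rewrite inE amin lexx.
have vC2 : v \in C2 by rewrite inE lexx vu1.
have u1C2 : u1 \in C2 by rewrite inE lexx vu1.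
have u1C3 : u1 \in C3 by rewrite inE lexx u1u2.
have sub : [set w | sq_adj e v w] \subset (C1 :|: C2 :|: C3) :\ v.
  apply/subsetP => w; rewrite inE /sq_adj => /andP[nvw h].
  have bw : (pos w <= pos u2)%R.
    case/orP: h => [/m1 h|/existsP[u /andP[evu euw]]].
      exact: le_trans h u1u2.
    case: (leP (pos w) (pos u1)) => [h|h]; first exact: le_trans h u1u2.
    apply: m2; apply: (between Hrep euw (m1 _ evu) (ltW h)).
    by apply/eqP => ew; rewrite ew ltxx in h.
  rewrite !inE eq_sym nvw /= amin /=.
  case: (leP (pos w) (pos v)) => [h1|h1]; first by apply/orP; left; apply/orP; left.
  case: (leP (pos w) (pos u1)) => [h2|h2].
    by apply/orP; left; apply/orP; right; apply/andP; split; [exact: ltW|].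
  by apply/orP; right; apply/andP; split; [exact: ltW|].
have := subset_leq_card sub.
rewrite /deg_sq => hle.
have hv : v \in C1 :|: C2 :|: C3 by rewrite !in_setU vC1.
have := cardsD1 v (C1 :|: C2 :|: C3); rewrite hv /= => hD.
have hU1 := cardsU C1 C2.
have hI1 : (0 < #|C1 :&: C2|)%N by apply/card_gt0P; exists v; rewrite in_setI vC1 vC2.
have hU2 := cardsU (C1 :|: C2) C3.
have hI2 : (0 < #|(C1 :|: C2) :&: C3|)%N.
  by apply/card_gt0P; exists u1; rewrite in_setI in_setU u1C2 u1C3 orbT.
have hI1' : (#|C1 :&: C2| <= #|C1|)%N by apply: subset_leq_card; apply: subsetIl.
have hI2' : (#|(C1 :|: C2) :&: C3| <= #|C3|)%N by apply: subset_leq_card; apply: subsetIr.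
have hc1 : (0 < #|C1|)%N by apply/card_gt0P; exists v.
have hc3 : (0 < #|C3|)%N by apply/card_gt0P; exists u1.
have hU1b : (#|C1 :&: C2| <= #|C1 :|: C2|)%N by apply: subset_leq_card; apply/subsetP=> x; rewrite !inE => /andP[->].
have {c1} c1 : (#|C1| <= clique_number e)%N := c1.
have {c2} c2 : (#|C2| <= clique_number e)%N := c2.
have {c3} c3 : (#|C3| <= clique_number e)%N := c3.
exact: (arith hle hD hU1 hI1 hU2 hI2 hI1' hI2' hU1b c1 c2 c3).
Qed.
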